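(* In the setting of the context, the multiplication maps $A\otimes_kB\to C$, $a\otimes b\mapsto ab$, and $B\otimes_kA\to C$, $b\otimes a\mapsto ba$, are linear isomorphisms.
   Context: $k$ is a field; $C_R(S)=\{r\in R:rs=sr\ \forall s\in S\}$. $N\subseteq M$ is a strongly separable, irreducible extension of $k$-algebras: $C_M(N)=k1$ and there are an $N$-bimodule map $E:M\to N$ and $x_1,\dots,x_n,y_1,\dots,y_n\in M$ with $\sum_iE(mx_i)y_i=m=\sum_ix_iE(y_im)$ for all $m\in M$, $E(1)\neq0$, $\sum_ix_iy_i\neq0$; normalized so that $E(1)=1$, whence $\sum_ix_iy_i=\lambda^{-1}1$ with $0\neq\lambda\in k$. Basic construction: given $S\subseteq R$, an $S$-bimodule map $E_S:R\to S$ with $E_S(1)=1$ and $r_i,s_i\in R$ with $\sum_iE_S(rr_i)s_i=r=\sum_ir_iE_S(s_ir)$ and $\sum_ir_is_i=\lambda^{-1}1$, set $R_1=R\otimes_SR$ with product $(a\otimes b)(c\otimes d)=aE_S(bc)\otimes d$, unit $\sum_ir_i\otimes s_i$, $R\subseteq R_1$ via $r\mapsto\sum_irr_i\otimes s_i$, $e=1\otimes1$, $E_R:R_1\to R$, $a\otimes b\mapsto\lambda ab$; then $E_R$, $\lambda^{-1}r_i\otimes1$, $1\otimes s_i$ satisfy the same conditions with the same $\lambda$. From $(N\subseteq M,E)$ get $M_1,e_1,E_M$; from $(M\subseteq M_1,E_M)$ get $M_2,e_2,E_{M_1}$. Let $A=C_{M_1}(N)$, $B=C_{M_2}(M)$,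 $C=C_{M_2}(N)$ (so $A,B\subseteq C$). Depth 2 is assumed: $M_1$ is free as right $M$-module with basis in $A$, $M_2$ free as right $M_1$-module with basis in $B$. *)

(* Defs.v *)
From HB Require Import structures.
From mathcomp Require Import all_boot all_order all_algebra.
Set Implicit Arguments. Unset Strict Implicit. Unset Printing Implicit Defensive.
Import GRing.Theory.
Local Open Scope ring_scope.

Definition klinear (k : fieldType) (U V : lmodType k) (f : U -> V) : Prop :=
  forall (c : k) (u v : U), f (c *: u + v) = c *: f u + f v.

Definition kbilinear_on (k : fieldType) (V W T : lmodType k)
    (P : V -> Prop) (Q : W -> Prop) (t : V -> W -> T) : Prop :=
  (forall (c : k) a a' b, P a -> P a' -> Q b ->
      t (c *: a + a') b = c *: t a b + t a' b) /\
  (forall (c : k) a b b', P a -> Q b -> Q b' ->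
      t a (c *: b + b') = c *: t a b + t a b').

Definition is_tensor_on (k : fieldType) (V W T : lmodType k)
    (P : V -> Prop) (Q : W -> Prop) (t : V -> W -> T) : Prop :=
  kbilinear_on P Q t /\
  (forall (U : lmodType k) (f : V -> W -> U), kbilinear_on P Q f ->
     exists g : T -> U, klinear g /\
       forall a b, P a -> Q b -> g (t a b) = f a b) /\
  (forall (U : lmodType k) (g1 g2 : T -> U), klinear g1 -> klinear g2 ->
     (forall a b, P a -> Q b -> g1 (t a b) = g2 (t a b)) ->
     forall z, g1 z = g2 z).

Definition balanced_over (k : fieldType) (V : lalgType k) (U : lmodType k)
    (S : V -> Prop) (f : V -> V -> U) : Prop :=
  forall s a b, S s -> f (a * s) b = f a (s * b).

Definition is_balanced_tensor (k : fieldType) (V : lalgType k) (T : lmodType k)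
    (S : V -> Prop) (t : V -> V -> T) : Prop :=
  kbilinear_on (fun _ => True) (fun _ => True) t /\ balanced_over S t /\
  (forall (U : lmodType k) (f : V -> V -> U),
     kbilinear_on (fun _ => True) (fun _ => True) f -> balanced_over S f ->
     exists g : T -> U, klinear g /\ forall a b, g (t a b) = f a b) /\
  (forall (U : lmodType k) (g1 g2 : T -> U), klinear g1 -> klinear g2 ->
     (forall a b, g1 (t a b) = g2 (t a b)) -> forall z, g1 z = g2 z).

(* Inclusion R -> R_1 = R (x)_S R of the basic construction:
   r |-> sum_i r r_i (x) s_i. *)
Definition bc_incl (k : fieldType) (V : lalgType k) (W : lmodType k) (n : nat)
    (t : V -> V -> W) (r s : 'I_n -> V) (v : V) : W :=
  \sum_(i < n) t (v * r i) (s i).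

Definition centralizer (V : pzRingType) (S : V -> Prop) (v : V) : Prop :=
  forall s, S s -> v * s = s * v.

(* R_1 is free as a right R-module (R acting through phi : R -> R_1)
   with basis b (indexed by an arbitrary type I). *)
Definition free_right_basis (R V : pzRingType) (phi : R -> V) (I : eqType)
    (b : I -> V) : Prop :=
  (forall u : V, exists (s : seq I) (c : I -> R),
      u = \sum_(i <- s) b i * phi (c i)) /\
  (forall (s : seq I) (c : I -> R), uniq s ->
      \sum_(i <- s) b i * phi (c i) = 0 -> forall i, i \in s -> c i = 0).

(* Main.v *)
Require Import Defs.
From HB Require Import structures.
From mathcomp Require Import all_boot all_order all_algebra.
Import GRing.Theory.
Local Open Scope ring_scope.
Set Implicit Arguments. Unset Strict Implicit. Unset Printing Implicit Defensive.

Section Gen.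
Variable k : fieldType.

Lemma klin0 (U V : lmodType k) (f : U -> V) : klinear f -> f 0 = 0.
Proof.
move=> hf; have := hf 1 0 0; rewrite !scale1r !addr0 => h.
by apply: (@addrI _ (f 0)); rewrite addr0 -h.
Qed.

Lemma klinD (U V : lmodType k) (f : U -> V) : klinear f -> forall u v, f (u + v) = f u + f v.
Proof. by move=> hf u v; have := hf 1 u v; rewrite !scale1r. Qed.

Lemma klinZ (U V : lmodType k) (f : U -> V) : klinear f -> forall c u, f (c *: u) = c *: f u.
Proof. by move=> hf c u; rewrite -[c *: u]addr0 hf klin0 // addr0. Qed.

Lemma klinN (U V : lmodType k) (f : U -> V) : klinear f -> forall u, f (- u) = - f u.
Proof. by move=> hf u; rewrite -scaleN1r klinZ // scaleN1r. Qed.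

Lemma klinB (U V : lmodType k) (f : U -> V) : klinear f -> forall u v, f (u - v) = f u - f v.
Proof. by move=> hf u v; rewrite klinD // klinN. Qed.

Lemma klin_sum (U V : lmodType k) (f : U -> V) : klinear f ->
  forall (I : Type) (s : seq I) (P : pred I) (F : I -> U),
  f (\sum_(i <- s | P i) F i) = \sum_(i <- s | P i) f (F i).
Proof. by move=> hf I s P F; rewrite (big_morph f (klinD hf) (klin0 hf)). Qed.

Lemma klin_comp (U V W : lmodType k) (f : U -> V) (g : V -> W) :
  klinear f -> klinear g -> klinear (fun u => g (f u)).
Proof. by move=> hf hg c u v; rewrite hf hg. Qed.

Lemma klin_id (U : lmodType k) : klinear (fun u : U => u).
Proof. by []. Qed.

Lemma klin_mull (V : algType k) (a : V) : klinear (fun v : V => a * v).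
Proof. by move=> c u v; rewrite mulrDr scalerAr. Qed.

Lemma klin_mulr (V : algType k) (a : V) : klinear (fun v : V => v * a).
Proof. by move=> c u v; rewrite mulrDl scalerAl. Qed.

Lemma klin_sumf (U V : lmodType k) (I : Type) (s : seq I) (f : I -> U -> V) :
  (forall i, klinear (f i)) -> klinear (fun u => \sum_(i <- s) f i u).
Proof.
move=> hf c u v; rewrite scaler_sumr -big_split /=.
by apply: eq_bigr => i _; rewrite hf.
Qed.

Lemma sum_on (U V : lmodType k) (P : U -> Prop) (f : U -> V) :
  P 0 -> (forall (c : k) u v, P u -> P v -> P (c *: u + v)) ->
  (forall (c : k) u v, P u -> P v -> f (c *: u + v) = c *: f u + f v) ->
  forall (I : Type) (s : seq I) (F : I -> U), (forall i, P (F i)) ->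
  f (\sum_(i <- s) F i) = \sum_(i <- s) f (F i).
Proof.
move=> P0 Pl fl I s F PF.
have f0 : f 0 = 0.
  have := fl 1 0 0 P0 P0; rewrite !scale1r !addr0 => h.
  by apply: (@addrI _ (f 0)); rewrite addr0 -h.
have PS : forall s', P (\sum_(i <- s') F i).
  elim=> [|a s' IH]; first by rewrite big_nil.
  by rewrite big_cons -[F a]scale1r; apply: Pl; [apply: PF | apply: IH].
elim: s => [|a s IH]; first by rewrite !big_nil.
rewrite !big_cons -[F a]scale1r fl; [|exact: PF|exact: PS].
by rewrite IH !scale1r.
Qed.

Lemma cent_lin (V : algType k) (S : V -> Prop) (c : k) u v :
  centralizer S u -> centralizer S v -> centralizer S (c *: u + v).
Proof.
by move=> hu hv s Ss; rewrite mulrDl mulrDr -scalerAl -scalerAr hu // hv.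
Qed.

Lemma cent0 (V : algType k) (S : V -> Prop) : centralizer S 0.
Proof. by move=> s _; rewrite mul0r mulr0. Qed.

Lemma centM (V : algType k) (S : V -> Prop) u v :
  centralizer S u -> centralizer S v -> centralizer S (u * v).
Proof. by move=> hu hv s Ss; rewrite -mulrA hv // mulrA hu // mulrA. Qed.

Lemma centZ (V : algType k) (S : V -> Prop) (c : k) u :
  centralizer S u -> centralizer S (c *: u).
Proof. by move=> hu; rewrite -[_ *: u]addr0; apply: cent_lin => //; apply: cent0. Qed.

Lemma cent_alg (V : algType k) (S : V -> Prop) (c : k) : centralizer S (c%:A).
Proof. by move=> s _; rewrite mulr_algl mulr_algr. Qed.

Lemma sum_count (I : eqType) (V : nmodType) (S s : seq I) (F : I -> V) :
  uniq S -> {subset s <= S} ->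
  \sum_(j <- s) F j = \sum_(j <- S) F j *+ count_mem j s.
Proof.
move=> uS; elim: s => [|x s IH] sub.
  by rewrite big_nil big1 // => j _; rewrite mulr0n.
rewrite big_cons IH; last by move=> z zs; apply: sub; rewrite inE zs orbT.
have xS : x \in S by apply: sub; rewrite inE eqxx.
rewrite [RHS](eq_bigr (fun j => F j *+ (x == j) + F j *+ count_mem j s)); last first.
  by move=> j _ /=; rewrite mulrnDr.
rewrite big_split /=; congr (_ + _).
rewrite (bigD1_seq x) //= eqxx mulr1n big1 ?addr0 // => j /negbTE.
by rewrite eq_sym => ->; rewrite mulr0n.
Qed.

End Gen.

Section Main.
Variables (k : fieldType) (M : algType k) (N : M -> Prop).
Hypotheses (hN1 : N 1)
  (hNlin : forall (c : k) u v, N u -> N v -> N (c *: u + v))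
  (hNmul : forall u v, N u -> N v -> N (u * v))
  (hirr : forall m : M, centralizer N m <-> exists c : k, m = c%:A).
Variable (E : M -> M).
Hypotheses (hEN : forall m, N (E m))
  (hEadd : forall m m', E (m + m') = E m + E m')
  (hEl : forall n m, N n -> E (n * m) = n * E m)
  (hEr : forall n m, N n -> E (m * n) = E m * n)
  (hE1 : E 1 = 1).
Variables (n : nat) (x y : 'I_n -> M) (lam : k).
Hypotheses (hlam : lam != 0)
  (hdual1 : forall m, \sum_(i < n) E (m * x i) * y i = m)
  (hdual2 : forall m, \sum_(i < n) x i * E (y i * m) = m)
  (hxy : \sum_(i < n) x i * y i = lam^-1%:A).
Variables (M1 : algType k) (tau : M -> M -> M1).
Hypotheses (htau : is_balanced_tensor N tau)
  (htaumul : forall a b c d, tau a b * tau c d = tau (a * E (b * c)) d)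
  (htau1 : 1 = \sum_(i < n) tau (x i) (y i)).
Variable (EM : M1 -> M).
Hypotheses (hEMlin : klinear EM)
  (hEM : forall a b, EM (tau a b) = lam *: (a * b)).
Variables (M2 : algType k) (sig : M1 -> M1 -> M2).
Hypotheses (hsig : is_balanced_tensor
            (fun s => exists m, s = bc_incl tau x y m) sig)
  (hsigmul : forall a b c d,
      sig a b * sig c d = sig (a * bc_incl tau x y (EM (b * c))) d)
  (hsig1 : 1 = \sum_(i < n) sig (lam^-1 *: tau (x i) 1) (tau 1 (y i))).
Hypothesis hd2b : exists (I : eqType) (b : I -> M2),
      free_right_basis
        (bc_incl sig (fun i => lam^-1 *: tau (x i) 1) (fun i => tau 1 (y i))) b /\
      forall i, centralizer (fun s => exists m,
          s = bc_incl sig (fun i => lam^-1 *: tau (x i) 1) (fun i => tau 1 (y i))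
                (bc_incl tau x y m)) (b i).
Local Notation i1 := (bc_incl tau x y).
Local Notation X := (fun i => lam^-1 *: tau (x i) 1).
Local Notation Y := (fun i => tau 1 (y i)).
Local Notation i2 := (bc_incl sig X Y).

Lemma tau_l b : klinear (fun a => tau a b).
Proof. by case: htau => [[h1 _] _] c u v; apply: h1. Qed.
Lemma tau_r a : klinear (tau a).
Proof. by case: htau => [[_ h2] _] c u v; apply: h2. Qed.
Lemma tau_bal s a b : N s -> tau (a * s) b = tau a (s * b).
Proof. by case: htau => [_ [h _]] Ns; apply: h. Qed.
Lemma tau_uniq (U : lmodType k) (g1 g2 : M1 -> U) : klinear g1 -> klinear g2 ->
  (forall a b, g1 (tau a b) = g2 (tau a b)) -> forall z, g1 z = g2 z.
Proof. by case: htau => [_ [_ [_ h]]]; apply: h. Qed.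

Lemma tau_suml (I : Type) (s : seq I) (F : I -> M) b :
  tau (\sum_(i <- s) F i) b = \sum_(i <- s) tau (F i) b.
Proof. exact: (klin_sum (tau_l b)). Qed.
Lemma tau_sumr (I : Type) (s : seq I) (F : I -> M) a :
  tau a (\sum_(i <- s) F i) = \sum_(i <- s) tau a (F i).
Proof. exact: (klin_sum (tau_r a)). Qed.
Lemma tau_Zl c a b : tau (c *: a) b = c *: tau a b.
Proof. exact: (klinZ (tau_l b)). Qed.
Lemma tau_Zr c a b : tau a (c *: b) = c *: tau a b.
Proof. exact: (klinZ (tau_r a)). Qed.

Lemma i1_tau a c d : i1 a * tau c d = tau (a * c) d.
Proof.
rewrite /bc_incl mulr_suml.
rewrite (eq_bigr (fun i => tau (a * (x i * E (y i * c))) d)); last first.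
  by move=> i _; rewrite htaumul mulrA.
by rewrite -tau_suml -mulr_sumr hdual2.
Qed.

Lemma tau_i1 a b c : tau a b * i1 c = tau a (b * c).
Proof.
rewrite /bc_incl mulr_sumr.
rewrite (eq_bigr (fun i => tau a (E ((b * c) * x i) * y i))); last first.
  by move=> i _; rewrite htaumul tau_bal // mulrA.
by rewrite -tau_sumr hdual1.
Qed.

Lemma i1M a b : i1 a * i1 b = i1 (a * b).
Proof.
rewrite {2}/bc_incl mulr_sumr /bc_incl; apply: eq_bigr => i _.
by rewrite i1_tau mulrA.
Qed.

Lemma i11 : i1 1 = 1.
Proof. by rewrite htau1 /bc_incl; apply: eq_bigr => i _; rewrite mul1r. Qed.

Lemma i1_lin : klinear i1.
Proof.
apply: klin_sumf => i c u v /=.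
by rewrite mulrDl -scalerAl (tau_l (y i)).
Qed.

Lemma D1 v : \sum_(i < n) X i * i1 (EM (Y i * v)) = v.
Proof.
apply: (@tau_uniq _ (fun v => \sum_(i < n) X i * i1 (EM (Y i * v))) id) => //.
  apply: klin_sumf => i; apply: klin_comp (klin_mull _).
  apply: klin_comp i1_lin; apply: klin_comp hEMlin; exact: klin_mull.
move=> a b /=.
rewrite (eq_bigr (fun i => tau (x i * E (y i * a)) b)); last first.
  move=> i _; rewrite htaumul hEM (klinZ i1_lin) -scalerAl -scalerAr tau_i1.
  by rewrite scalerA mulVf // scale1r !mul1r tau_bal.
by rewrite -tau_suml hdual2.
Qed.

Lemma D2 v : \sum_(i < n) i1 (EM (v * X i)) * Y i = v.
Proof.
apply: (@tau_uniq _ (fun v => \sum_(i < n) i1 (EM (v * X i)) * Y i) id) => //.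
  apply: klin_sumf => i; apply: klin_comp (klin_mulr _).
  apply: klin_comp i1_lin; apply: klin_comp hEMlin; exact: klin_mulr.
move=> a b /=.
rewrite (eq_bigr (fun i => tau a (E (b * x i) * y i))); last first.
  move=> i _; rewrite -scalerAr htaumul (klinZ hEMlin) hEM scalerA mulVf //.
  by rewrite scale1r mulr1 i1_tau mulr1 tau_bal.
by rewrite -tau_sumr hdual1.
Qed.

Lemma EMinj a b : tau a 1 = tau b 1 -> a = b.
Proof.
move=> h; have := congr1 EM h; rewrite !hEM !mulr1.
exact: (scalerI hlam).
Qed.

Lemma ue_form u : u * tau 1 1 = tau (lam^-1 *: EM (u * tau 1 1)) 1.
Proof.
apply: (@tau_uniq _ (fun v => v * tau 1 1) (fun v => tau (lam^-1 *: EM (v * tau 1 1)) 1)) => //.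
- exact: klin_mulr.
- apply: klin_comp (tau_l 1); apply: klin_comp; last first.
    by move=> c p q; rewrite scalerDr !scalerA mulrC.
  apply: klin_comp hEMlin; exact: klin_mulr.
move=> a b; by rewrite htaumul hEM scalerA mulVf // scale1r !mulr1.
Qed.

Lemma cent1 u : (forall m, u * i1 m = i1 m * u) -> exists c : k, u = c%:A.
Proof.
move=> hu.
set w := lam^-1 *: EM (u * tau 1 1).
have hue := ue_form u; rewrite -/w in hue.
have ie a : i1 a * tau 1 1 = tau a 1 by rewrite i1_tau mulr1.
have ei a : tau 1 1 * i1 a = tau 1 a by rewrite tau_i1 mul1r.
have wc : centralizer N w.
  move=> m Nm; apply: EMinj.
  have e1 : tau 1 1 * i1 m = i1 m * tau 1 1.
    by rewrite ei ie; have := tau_bal 1 1 Nm; rewrite mul1r mulr1 => ->.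
  rewrite tau_bal // mulr1.
  have := congr1 (fun z => z * i1 m) hue => /=.
  by rewrite -mulrA e1 mulrA hu -mulrA hue i1_tau tau_i1 mul1r => <-.
have [c wc'] := (hirr w).1 wc.
exists c.
rewrite -[u]mulr1 {1}htau1 mulr_sumr.
rewrite (eq_bigr (fun i => c *: tau (x i) (y i))); last first.
  move=> i _.
  have -> : tau (x i) (y i) = i1 (x i) * tau 1 1 * i1 (y i) by rewrite ie tau_i1 mul1r.
  rewrite !mulrA hu -[i1 (x i) * u * _]mulrA hue wc' i1_tau.
  by rewrite tau_i1 mul1r mulr_algr tau_Zl ie tau_i1 mul1r.
by rewrite -scaler_sumr -htau1.
Qed.

Lemma sig_l b : klinear (fun a => sig a b).
Proof. by case: hsig => [[h1 _] _] c u v; apply: h1. Qed.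
Lemma sig_r a : klinear (sig a).
Proof. by case: hsig => [[_ h2] _] c u v; apply: h2. Qed.
Lemma sig_bal m a b : sig (a * i1 m) b = sig a (i1 m * b).
Proof. by case: hsig => [_ [h _]]; apply: h; exists m. Qed.
Lemma sig_uniq (U : lmodType k) (g1 g2 : M2 -> U) : klinear g1 -> klinear g2 ->
  (forall a b, g1 (sig a b) = g2 (sig a b)) -> forall z, g1 z = g2 z.
Proof. by case: hsig => [_ [_ [_ h]]]; apply: h. Qed.
Lemma sig_suml (I : Type) (s : seq I) (F : I -> M1) b :
  sig (\sum_(i <- s) F i) b = \sum_(i <- s) sig (F i) b.
Proof. exact: (klin_sum (sig_l b)). Qed.
Lemma sig_sumr (I : Type) (s : seq I) (F : I -> M1) a :
  sig a (\sum_(i <- s) F i) = \sum_(i <- s) sig a (F i).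
Proof. exact: (klin_sum (sig_r a)). Qed.

Lemma i2_sig u a b : i2 u * sig a b = sig (u * a) b.
Proof.
rewrite /bc_incl mulr_suml.
rewrite (eq_bigr (fun i => sig (u * (X i * i1 (EM (Y i * a)))) b)); last first.
  by move=> i _; rewrite hsigmul mulrA.
by rewrite -sig_suml -mulr_sumr D1.
Qed.

Lemma sig_i2 a b u : sig a b * i2 u = sig a (b * u).
Proof.
rewrite /bc_incl mulr_sumr.
rewrite (eq_bigr (fun i => sig a (i1 (EM ((b * u) * X i)) * Y i))); last first.
  by move=> i _; rewrite hsigmul sig_bal mulrA.
by rewrite -sig_sumr D2.
Qed.

Lemma i2M a b : i2 a * i2 b = i2 (a * b).
Proof.
rewrite {2}/bc_incl mulr_sumr /bc_incl; apply: eq_bigr => i _.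
by rewrite i2_sig mulrA.
Qed.

Lemma i21 : i2 1 = 1.
Proof. by rewrite hsig1 /bc_incl; apply: eq_bigr => i _; rewrite mul1r. Qed.

Lemma i2_lin : klinear i2.
Proof.
apply: klin_sumf => i c u v /=.
by rewrite mulrDl -scalerAl (sig_l (Y i)).
Qed.

Lemma i2_alg c : i2 c%:A = c%:A.
Proof. by rewrite (klinZ i2_lin) i21. Qed.

Lemma i2_sum (I : Type) (s : seq I) (F : I -> M1) :
  i2 (\sum_(i <- s) F i) = \sum_(i <- s) i2 (F i).
Proof. exact: (klin_sum i2_lin). Qed.

Lemma E2_ex : exists E2 : M2 -> M1, klinear E2 /\
  forall a b, E2 (sig a b) = lam *: (a * b).
Proof.
case: hsig => [_ [_ [h _]]].
apply: (h M1 (fun a b => lam *: (a * b))).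
- split=> c a a' b _ _ _.
    by rewrite mulrDl scalerDr -scalerAl !scalerA mulrC.
  by rewrite mulrDr scalerDr -scalerAr !scalerA mulrC.
- by move=> s a b [m ->]; rewrite mulrA.
Qed.

Section WithE2.
Variable E2 : M2 -> M1.
Hypotheses (hE2lin : klinear E2) (hE2 : forall a b, E2 (sig a b) = lam *: (a * b)).

Lemma E2l u w : E2 (i2 u * w) = u * E2 w.
Proof.
apply: (@sig_uniq _ (fun w => E2 (i2 u * w)) (fun w => u * E2 w)).
- exact: klin_comp (klin_mull _) hE2lin.
- exact: klin_comp hE2lin (klin_mull _).
by move=> a b; rewrite i2_sig !hE2 -scalerAr mulrA.
Qed.

Lemma E2r u w : E2 (w * i2 u) = E2 w * u.
Proof.
apply: (@sig_uniq _ (fun w => E2 (w * i2 u)) (fun w => E2 w * u)).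
- exact: klin_comp (klin_mulr _) hE2lin.
- exact: klin_comp hE2lin (klin_mulr _).
by move=> a b; rewrite sig_i2 !hE2 -scalerAl mulrA.
Qed.

Lemma E2_sum (I : Type) (s : seq I) (F : I -> M2) :
  E2 (\sum_(i <- s) F i) = \sum_(i <- s) E2 (F i).
Proof. exact: (klin_sum hE2lin). Qed.

Definition P l := lam^-1 *: sig (X l) 1.
Definition Q l := sig 1 (Y l).

Lemma DD1 w : \sum_(l < n) P l * i2 (E2 (Q l * w)) = w.
Proof.
apply: (@sig_uniq _ (fun w => \sum_(l < n) P l * i2 (E2 (Q l * w))) id) => //.
  apply: klin_sumf => i; apply: klin_comp (klin_mull _).
  apply: klin_comp i2_lin; apply: klin_comp hE2lin; exact: klin_mull.
move=> a b /=.
rewrite (eq_bigr (fun i => sig (X i * i1 (EM (Y i * a))) b)); last first.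
  move=> i _; rewrite /P /Q hsigmul hE2 (klinZ i2_lin) -scalerAl -scalerAr sig_i2.
  by rewrite scalerA mulVf // scale1r !mul1r sig_bal.
by rewrite -sig_suml D1.
Qed.

Lemma DD2 w : \sum_(l < n) i2 (E2 (w * P l)) * Q l = w.
Proof.
apply: (@sig_uniq _ (fun w => \sum_(l < n) i2 (E2 (w * P l)) * Q l) id) => //.
  apply: klin_sumf => i; apply: klin_comp (klin_mulr _).
  apply: klin_comp i2_lin; apply: klin_comp hE2lin; exact: klin_mulr.
move=> a b /=.
rewrite (eq_bigr (fun i => sig a (i1 (EM (b * X i)) * Y i))); last first.
  move=> i _; rewrite /P /Q -scalerAr hsigmul (klinZ hE2lin) hE2 scalerA mulVf //.
  by rewrite scale1r mulr1 i2_sig mulr1 sig_bal.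
by rewrite -sig_sumr D2.
Qed.

Lemma nondeg d : (forall w, E2 (d * w) = 0) -> d = 0.
Proof.
move=> h; rewrite -(DD2 d) big1 // => l _.
by rewrite h (klin0 i2_lin) mul0r.
Qed.

Definition Bp (b : M2) := centralizer (fun s => exists m, s = i2 (i1 m)) b.

Lemma E2B b : Bp b -> exists c : k, E2 b = c%:A.
Proof.
move=> hb; apply: cent1 => m.
rewrite -E2r hb; [by rewrite E2l | by exists m].
Qed.


Lemma i2MMn c m : i2 (c *+ m) = i2 c *+ m.
Proof. by rewrite -scaler_nat (klinZ i2_lin) scaler_nat. Qed.

Lemma decomp : exists (I : eqType) (S : seq I) (bb DD : I -> M2),
  (forall j, Bp (bb j)) /\ (forall j, Bp (DD j)) /\
  (forall w, w = \sum_(j <- S) bb j * i2 (E2 (DD j * w))).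
Proof.
case: hd2b => I [b [[span free] bcent]].
have rep : forall ws : seq M2, exists S : seq I, uniq S /\
    exists c : M2 -> I -> M1, forall w, w \in ws ->
      w = \sum_(j <- S) b j * i2 (c w j).
  elim=> [|w ws [S [uS [c hc]]]].
    by exists [::]; split => //; exists (fun _ _ => 0) => w; rewrite in_nil.
  have [s [cw hw]] := span w.
  exists (undup (S ++ s)); split; first exact: undup_uniq.
  exists (fun w' j => if w' == w then cw j *+ count_mem j s
                      else c w' j *+ count_mem j S).
  move=> w'; rewrite inE; case: eqP => [-> _ | _ /= w'ws].
    rewrite {1}hw (@sum_count _ _ (undup (S ++ s)) s _ (undup_uniq _)); last first.
      by move=> z zs; rewrite mem_undup mem_cat zs orbT.
    by apply: eq_bigr => j _; rewrite i2MMn mulrnAr.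
  rewrite {1}(hc _ w'ws) (@sum_count _ _ (undup (S ++ s)) S _ (undup_uniq _)); last first.
    by move=> z zs; rewrite mem_undup mem_cat zs.
  by apply: eq_bigr => j _; rewrite i2MMn mulrnAr.
have [S [uS [c hc]]] := rep [seq P l | l <- enum 'I_n].
have hcP l : P l = \sum_(j <- S) b j * i2 (c (P l) j).
  by apply: hc; rewrite map_f // mem_enum.
pose D j := \sum_(l < n) i2 (c (P l) j) * Q l.
have R0 : forall w, w = \sum_(j <- S) b j * i2 (E2 (D j * w)).
  move=> w; rewrite -{1}(DD1 w).
  rewrite (eq_bigr (fun l => \sum_(j <- S) b j * i2 (c (P l) j * E2 (Q l * w)))); last first.
    move=> l _; rewrite {1}hcP mulr_suml; apply: eq_bigr => j _.
    by rewrite -mulrA i2M.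
  rewrite exchange_big /=; apply: eq_bigr => j _.
  rewrite -mulr_sumr -i2_sum /D mulr_suml E2_sum; congr (_ * i2 _).
  by apply: eq_bigr => l _; rewrite -mulrA E2l.
have Dc : forall j, j \in S -> Bp (D j).
  move=> j jS s0 [m ->]; apply/eqP; rewrite -subr_eq0; apply/eqP.
  set s := i2 (i1 m).
  apply: nondeg => w.
  have H : \sum_(j <- S) b j * i2 (E2 ((D j * s - s * D j) * w)) = 0.
    rewrite (eq_bigr (fun j => b j * i2 (E2 (D j * (s * w))) -
                               s * (b j * i2 (E2 (D j * w))))); last first.
      move=> i _; rewrite mulrBl (klinB hE2lin) (klinB i2_lin) mulrBr -!mulrA.
      by rewrite E2l -i2M !mulrA [b i * s]bcent //; exists m.
    by rewrite big_split /= sumrN -mulr_sumr -!R0 subrr.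
  exact: (free S (fun j => E2 ((D j * s - s * D j) * w)) uS H j jS).
exists I, S, (fun j => if j \in S then b j else 0), (fun j => if j \in S then D j else 0).
split; first by move=> j; case: ifP => _; [apply: bcent | apply: cent0].
split; first by move=> j; case: ifP => jS; [apply: Dc | apply: cent0].
move=> w; rewrite {1}(R0 w); apply: eq_big_seq => j jS.
by rewrite jS.
Qed.


Lemma decompL (I : Type) (S : seq I) (bb DD : I -> M2) :
  (forall w, w = \sum_(j <- S) bb j * i2 (E2 (DD j * w))) ->
  forall w, w = \sum_(j <- S) i2 (E2 (w * bb j)) * DD j.
Proof.
move=> R w.
rewrite -[X in _ = X]DD2 -{1}(DD2 w); apply: eq_bigr => l _; congr (i2 _ * _).
rewrite {1}(R (P l)) mulr_sumr E2_sum mulr_suml E2_sum; apply: eq_bigr => j _.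
by rewrite mulrA E2r -mulrA E2l.
Qed.

Definition Ap (a : M1) := centralizer (fun s => exists m, N m /\ s = i1 m) a.
Definition Cp (w : M2) := centralizer (fun s => exists m, N m /\ s = i2 (i1 m)) w.

Lemma part2 (T : lmodType k) (t : M2 -> M1 -> T) : is_tensor_on Bp Ap t ->
  forall g : T -> M2, klinear g ->
  (forall b a, Bp b -> Ap a -> g (t b a) = b * i2 a) ->
  injective g /\ (forall w, Cp w <-> exists z, g z = w).
Proof.
move=> [[tb1 tb2] [_ tuniq]] g glin gt.
have [I [S [bb [DD [bbB [DDB R]]]]]] := decomp.
have gC : forall z, Cp (g z).
  move=> z s [m [Nm ->]].
  apply: (tuniq M2 (fun z => g z * i2 (i1 m)) (fun z => i2 (i1 m) * g z)).
  - exact: klin_comp glin (klin_mulr _).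
  - exact: klin_comp glin (klin_mull _).
  move=> b a hb ha; rewrite gt // -mulrA i2M ha; last by exists m.
  rewrite -i2M mulrA hb; last by exists m.
  by rewrite mulrA.
have hA : forall w, Cp w -> forall j, Ap (E2 (DD j * w)).
  move=> w hw j s [m [Nm ->]].
  rewrite -E2r -mulrA hw; last by exists m.
  rewrite mulrA DDB; last by exists m.
  by rewrite -mulrA E2l.
have A0 : Ap 0 by apply: cent0.
have B0 : Bp 0 by apply: cent0.
have t0 : forall b, Bp b -> t b 0 = 0.
  move=> b hb; have := tb2 1 b 0 0 hb A0 A0.
  rewrite !scale1r !addr0 => h.
  by apply: (@addrI _ (t b 0)); rewrite addr0 -h.
have tZ2 : forall c b a, Bp b -> Ap a -> t b (c *: a) = c *: t b a.
  move=> c b a hb ha; have := tb2 c b a 0 hb ha A0.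
  by rewrite !addr0 t0 // addr0.
have t0' : forall a, Ap a -> t 0 a = 0.
  move=> a ha; have := tb1 1 0 0 a B0 B0 ha.
  rewrite !scale1r !addr0 => h.
  by apply: (@addrI _ (t 0 a)); rewrite addr0 -h.
have tZ1 : forall c b a, Bp b -> Ap a -> t (c *: b) a = c *: t b a.
  move=> c b a hb ha; have := tb1 c b 0 a hb B0 ha.
  by rewrite !addr0 t0' // addr0.
pose h w := \sum_(j <- S) t (bb j) (E2 (DD j * w)).
have hg : forall z, h (g z) = z.
  apply: (tuniq T (fun z => h (g z)) id) => //.
    move=> c z z'; rewrite /h glin scaler_sumr -big_split; apply: eq_bigr => j _ /=.
    rewrite mulrDr -scalerAr (klinD hE2lin) (klinZ hE2lin) tb2 //.
    exact: (hA (g z) (gC z) j).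
    exact: (hA (g z') (gC z') j).
  move=> b a hb ha; rewrite gt // /h.
  have bt : forall j, Bp (bb j * i2 (E2 (DD j * b))).
    move=> j; have [c hc] := E2B (centM (DDB j) hb).
    rewrite hc i2_alg; exact: (@centM _ M2 _ _ _ (bbB j) (@cent_alg _ M2 _ _)).
  transitivity (\sum_(j <- S) t (bb j * i2 (E2 (DD j * b))) a).
    apply: eq_bigr => j _; rewrite mulrA E2r.
    have [c hc] := E2B (centM (DDB j) hb).
    by rewrite hc mulr_algl i2_alg mulr_algr tZ2 ?tZ1 //; apply: bbB.
  rewrite -(@sum_on _ _ _ Bp (fun u => t u a)) //; first by rewrite -R.
  - by move=> c u v hu hv; exact: (@cent_lin _ M2 _ c u v hu hv).
  - by move=> c u v hu hv; apply: tb1.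
split; first by move=> z z' e; rewrite -(hg z) -(hg z') e.
move=> w; split; last by move=> [z <-]; apply: gC.
move=> hw; exists (\sum_(j <- S) t (bb j) (E2 (DD j * w))).
rewrite (klin_sum glin) [RHS]R; apply: eq_bigr => j _; apply: gt.
  exact: bbB.
exact: hA.
Qed.

Lemma part1 (T : lmodType k) (t : M1 -> M2 -> T) : is_tensor_on Ap Bp t ->
  forall g : T -> M2, klinear g ->
  (forall a b, Ap a -> Bp b -> g (t a b) = i2 a * b) ->
  injective g /\ (forall w, Cp w <-> exists z, g z = w).
Proof.
move=> [[tb1 tb2] [_ tuniq]] g glin gt.
have [I [S [bb [DD [bbB [DDB R]]]]]] := decomp.
have L := decompL R.
have gC : forall z, Cp (g z).
  move=> z s [m [Nm ->]].
  apply: (tuniq M2 (fun z => g z * i2 (i1 m)) (fun z => i2 (i1 m) * g z)).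
  - exact: klin_comp glin (klin_mulr _).
  - exact: klin_comp glin (klin_mull _).
  move=> a b ha hb; rewrite gt // -mulrA hb; last by exists m.
  rewrite [LHS]mulrA [i2 a * i2 _]i2M ha; last by exists m.
  by rewrite -i2M mulrA.
have hA : forall w, Cp w -> forall j, Ap (E2 (w * bb j)).
  move=> w hw j s [m [Nm ->]].
  rewrite -E2r -mulrA bbB; last by exists m.
  rewrite mulrA hw; last by exists m.
  by rewrite -mulrA E2l.
have A0 : Ap 0 by apply: cent0.
have B0 : Bp 0 by apply: cent0.
have t0 : forall a, Ap a -> t a 0 = 0.
  move=> a ha; have := tb2 1 a 0 0 ha B0 B0.
  rewrite !scale1r !addr0 => h.
  by apply: (@addrI _ (t a 0)); rewrite addr0 -h.
have tZ2 : forall c a b, Ap a -> Bp b -> t a (c *: b) = c *: t a b.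
  move=> c a b ha hb; have := tb2 c a b 0 ha hb B0.
  by rewrite !addr0 t0 // addr0.
have t0' : forall b, Bp b -> t 0 b = 0.
  move=> b hb; have := tb1 1 0 0 b A0 A0 hb.
  rewrite !scale1r !addr0 => h.
  by apply: (@addrI _ (t 0 b)); rewrite addr0 -h.
have tZ1 : forall c a b, Ap a -> Bp b -> t (c *: a) b = c *: t a b.
  move=> c a b ha hb; have := tb1 c a 0 b ha A0 hb.
  by rewrite !addr0 t0' // addr0.
pose h w := \sum_(j <- S) t (E2 (w * bb j)) (DD j).
have hg : forall z, h (g z) = z.
  apply: (tuniq T (fun z => h (g z)) id) => //.
    move=> c z z'; rewrite /h glin scaler_sumr -big_split; apply: eq_bigr => j _ /=.
    rewrite mulrDl -scalerAl (klinD hE2lin) (klinZ hE2lin) tb1 //.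
    exact: (hA (g z) (gC z) j).
    exact: (hA (g z') (gC z') j).
  move=> a b ha hb; rewrite gt // /h.
  have bt : forall j, Bp (i2 (E2 (b * bb j)) * DD j).
    move=> j; have [c hc] := E2B (centM hb (bbB j)).
    rewrite hc i2_alg; exact: (@centM _ M2 _ _ _ (@cent_alg _ M2 _ _) (DDB j)).
  transitivity (\sum_(j <- S) t a (i2 (E2 (b * bb j)) * DD j)).
    apply: eq_bigr => j _; rewrite -mulrA E2l.
    have [c hc] := E2B (centM hb (bbB j)).
    by rewrite hc mulr_algr i2_alg mulr_algl tZ1 ?tZ2 //; apply: DDB.
  rewrite -(@sum_on _ _ _ Bp (fun u => t a u)) //; first by rewrite -L.
  - by move=> c u v hu hv; exact: (@cent_lin _ M2 _ c u v hu hv).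
  - by move=> c u v hu hv; apply: tb2.
split; first by move=> z z' e; rewrite -(hg z) -(hg z') e.
move=> w; split; last by move=> [z <-]; apply: gC.
move=> hw; exists (\sum_(j <- S) t (E2 (w * bb j)) (DD j)).
rewrite (klin_sum glin) [RHS]L; apply: eq_bigr => j _; apply: gt.
  exact: hA.
exact: DDB.
Qed.

End WithE2.

Lemma main_sec :
  (forall (T : lmodType k) (t : M1 -> M2 -> T),
     is_tensor_on (centralizer (fun s => exists m, N m /\ s = i1 m))
                  (centralizer (fun s => exists m, s = i2 (i1 m))) t ->
     forall g : T -> M2, klinear g ->
     (forall a b, centralizer (fun s => exists m, N m /\ s = i1 m) a ->
                  centralizer (fun s => exists m, s = i2 (i1 m)) b ->
                  g (t a b) = i2 a * b) ->
     injective g /\ (forall w, centralizer (fun s => exists m, N m /\ s = i2 (i1 m)) w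
                                <-> exists z, g z = w)) /\
  (forall (T : lmodType k) (t : M2 -> M1 -> T),
     is_tensor_on (centralizer (fun s => exists m, s = i2 (i1 m)))
                  (centralizer (fun s => exists m, N m /\ s = i1 m)) t ->
     forall g : T -> M2, klinear g ->
     (forall b a, centralizer (fun s => exists m, s = i2 (i1 m)) b ->
                  centralizer (fun s => exists m, N m /\ s = i1 m) a ->
                  g (t b a) = b * i2 a) ->
     injective g /\ (forall w, centralizer (fun s => exists m, N m /\ s = i2 (i1 m)) w
                                <-> exists z, g z = w)).
Proof.
have [E2 [hE2lin hE2]] := E2_ex.
split; [exact: (part1 hE2lin hE2) | exact: (part2 hE2lin hE2)].
Qed.

End Main.

Theorem lemma3p4
  (k : fieldType) (M : algType k)
  (* N is a k-subalgebra of M *)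
  (N : M -> Prop)
  (hN1 : N 1)
  (hNlin : forall (c : k) u v, N u -> N v -> N (c *: u + v))
  (hNmul : forall u v, N u -> N v -> N (u * v))
  (* irreducible: C_M(N) = k1 *)
  (hirr : forall m : M, centralizer N m <-> exists c : k, m = c%:A)
  (* E : M -> N an N-bimodule map, normalized E(1) = 1 *)
  (E : M -> M)
  (hEN : forall m, N (E m))
  (hEadd : forall m m', E (m + m') = E m + E m')
  (hEl : forall n m, N n -> E (n * m) = n * E m)
  (hEr : forall n m, N n -> E (m * n) = E m * n)
  (hE1 : E 1 = 1)
  (* dual bases, sum_i x_i y_i = lam^-1 1 *)
  (n : nat) (x y : 'I_n -> M) (lam : k) (hlam : lam != 0)
  (hdual1 : forall m, \sum_(i < n) E (m * x i) * y i = m)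
  (hdual2 : forall m, \sum_(i < n) x i * E (y i * m) = m)
  (hxy : \sum_(i < n) x i * y i = lam^-1%:A)
  (* basic construction M_1 = M (x)_N M, with its algebra structure *)
  (M1 : algType k) (tau : M -> M -> M1)
  (htau : is_balanced_tensor N tau)
  (htaumul : forall a b c d, tau a b * tau c d = tau (a * E (b * c)) d)
  (htau1 : 1 = \sum_(i < n) tau (x i) (y i))
  (* E_M : M_1 -> M, a (x) b |-> lam a b *)
  (EM : M1 -> M) (hEMlin : klinear EM)
  (hEM : forall a b, EM (tau a b) = lam *: (a * b))
  (* basic construction M_2 = M_1 (x)_M M_1 for (M in M_1, E_M) *)
  (M2 : algType k) (sig : M1 -> M1 -> M2)
  (hsig : is_balanced_tensor
            (fun s => exists m, s = bc_incl tau x y m) sig)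
  (hsigmul : forall a b c d,
      sig a b * sig c d = sig (a * bc_incl tau x y (EM (b * c))) d)
  (hsig1 : 1 = \sum_(i < n) sig (lam^-1 *: tau (x i) 1) (tau 1 (y i)))
  (* depth 2 *)
  (hd2a : exists (I : eqType) (b : I -> M1),
      free_right_basis (bc_incl tau x y) b /\
      forall i, centralizer (fun s => exists m, N m /\ s = bc_incl tau x y m) (b i))
  (hd2b : exists (I : eqType) (b : I -> M2),
      free_right_basis
        (bc_incl sig (fun i => lam^-1 *: tau (x i) 1) (fun i => tau 1 (y i))) b /\
      forall i, centralizer (fun s => exists m,
          s = bc_incl sig (fun i => lam^-1 *: tau (x i) 1) (fun i => tau 1 (y i))
                (bc_incl tau x y m)) (b i)) :
  let i1 := bc_incl tau x y in
  let i2 := bc_incl sig (fun i => lam^-1 *: tau (x i) 1) (fun i => tau 1 (y i)) in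
  let A := centralizer (fun s => exists m, N m /\ s = i1 m) in
  let B := centralizer (fun s => exists m, s = i2 (i1 m)) in
  let C := centralizer (fun s => exists m, N m /\ s = i2 (i1 m)) in
  (* A (x)_k B -> C, a (x) b |-> ab, is a linear isomorphism *)
  (forall (T : lmodType k) (t : M1 -> M2 -> T), is_tensor_on A B t ->
     forall g : T -> M2, klinear g ->
     (forall a b, A a -> B b -> g (t a b) = i2 a * b) ->
     injective g /\ (forall w, C w <-> exists z, g z = w)) /\
  (* B (x)_k A -> C, b (x) a |-> ba, is a linear isomorphism *)
  (forall (T : lmodType k) (t : M2 -> M1 -> T), is_tensor_on B A t ->
     forall g : T -> M2, klinear g ->
     (forall b a, B b -> A a -> g (t b a) = b * i2 a) ->
     injective g /\ (forall w, C w <-> exists z, g z = w)).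
Proof.
move=> i1 i2 A B C.
by apply: main_sec.
Qed.
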